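(* There exist constants $K_1,K_2>0$ (independent of $h$ and of the grid function) such that for every grid function $v\in\mathbb{V}_h$, \[ \|\nabla_hv\|_{l^4}\le K_1\|\nabla_hv\|^{1/2}\Big(2\|\Delta_hv\|^2+\frac{1}{L^2}\|\nabla_hv\|^2\Big)^{1/4} \] and \[ \|\nabla_hv\|_{l^6}\le K_2\|\nabla_hv\|^{1/3}\Big(16\|\Delta_hv\|^2+\frac{1}{L^2}\|\nabla_hv\|^2\Big)^{1/3}. \]
   Context: $L>0$, $M$ a positive integer, $h=L/M$, $\Omega_h=\{(ih,jh):1\le i,j\le M\}$, $\mathbb{V}_h$ the grid functions on $\{(ih,jh):0\le i,j\le M\}$ that are $L$-periodic in each direction. $\Delta_x v_{ij}=(v_{i+1,j}-v_{i-1,j})/(2h)$, $\Delta_yv_{ij}=(v_{i,j+1}-v_{i,j-1})/(2h)$, $\nabla_hv=(\Delta_xv,\Delta_yv)^T$, $\delta_x^2v_{ij}=(v_{i+1,j}-2v_{ij}+v_{i-1,j})/h^2$, similarly $\delta_y^2$, $\Delta_h=\delta_x^2+\delta_y^2$. $\|v\|^2=h^2\sum_{\Omega_h}v_h^2$, $\|\nabla_hv\|_{l^q}=(h^2\sum_{\Omega_h}|\nabla_hv_h|^q)^{1/q}$ with $|\cdot|$ Euclidean, $\|\nabla_hv\|=\|\nabla_hv\|_{l^2}$. *)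

(* Defs.v *)
From HB Require Import structures.
From mathcomp Require Import all_boot all_order all_algebra.
From mathcomp Require Import reals exp.
Set Implicit Arguments. Unset Strict Implicit. Unset Printing Implicit Defensive.
Import Order.TTheory GRing.Theory Num.Theory.
Local Open Scope ring_scope.

Section GridDefs.
Variable R : realType.

(* Grid functions are indexed by integers (i,j) <-> point (ih, jh);
   L-periodicity in each direction = M-periodicity of the indices. *)
Definition periodic (M : nat) (v : int -> int -> R) : Prop :=
  forall i j : int, v (i + M%:Z) j = v i j /\ v i (j + M%:Z) = v i j.

Definition Dx (h : R) (v : int -> int -> R) (i j : int) : R :=
  (v (i + 1) j - v (i - 1) j) / (2 * h).
Definition Dy (h : R) (v : int -> int -> R) (i j : int) : R :=
  (v i (j + 1) - v i (j - 1)) / (2 * h).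
Definition d2x (h : R) (v : int -> int -> R) (i j : int) : R :=
  (v (i + 1) j - 2 * v i j + v (i - 1) j) / (h ^+ 2).
Definition d2y (h : R) (v : int -> int -> R) (i j : int) : R :=
  (v i (j + 1) - 2 * v i j + v i (j - 1)) / (h ^+ 2).
Definition lap_h (h : R) (v : int -> int -> R) (i j : int) : R :=
  d2x h v i j + d2y h v i j.

Definition gridsum (M : nat) (F : int -> int -> R) : R :=
  \sum_(1 <= i < M.+1) \sum_(1 <= j < M.+1) F (i%:Z) (j%:Z).

Definition l2norm (h : R) (M : nat) (f : int -> int -> R) : R :=
  Num.sqrt (h ^+ 2 * gridsum M (fun i j => f i j ^+ 2)).

Definition gradabs (h : R) (v : int -> int -> R) (i j : int) : R :=
  Num.sqrt (Dx h v i j ^+ 2 + Dy h v i j ^+ 2).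

Definition grad_lq (h : R) (M : nat) (q : R) (v : int -> int -> R) : R :=
  powR (h ^+ 2 * gridsum M (fun i j => powR (gradabs h v i j) q)) q^-1.

End GridDefs.

(* Main.v *)
Require Import Defs.
From HB Require Import structures.
From mathcomp Require Import all_boot all_order all_algebra.
From mathcomp Require Import reals exp.
From mathcomp Require Import ring lra.
Import Order.TTheory GRing.Theory Num.Theory.
Local Open Scope ring_scope.
Set Implicit Arguments. Unset Strict Implicit. Unset Printing Implicit Defensive.
Section Aux.
Variable R : realType.
Implicit Types (F G : int -> int -> R).

Lemma gridsumD M F G : gridsum M (fun i j => F i j + G i j) = gridsum M F + gridsum M G.
Proof. rewrite /gridsum -big_split /=; apply: eq_bigr => i _; by rewrite big_split. Qed.

Lemma gridsumN M F : gridsum M (fun i j => - F i j) = - gridsum M F.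
Proof. rewrite /gridsum -sumrN; apply: eq_bigr => i _; by rewrite sumrN. Qed.

Lemma gridsumB M F G : gridsum M (fun i j => F i j - G i j) = gridsum M F - gridsum M G.
Proof. by rewrite gridsumD gridsumN. Qed.

Lemma gridsumZ M c F : gridsum M (fun i j => c * F i j) = c * gridsum M F.
Proof. rewrite /gridsum mulr_sumr; apply: eq_bigr => i _; by rewrite mulr_sumr. Qed.

Lemma gridsum_ext M F G : (forall i j, F i j = G i j) -> gridsum M F = gridsum M G.
Proof. move=> e; rewrite /gridsum; apply: eq_bigr => i _; apply: eq_bigr => j _; exact: e. Qed.

Lemma gridsum_le M F G : (forall i j, F i j <= G i j) -> gridsum M F <= gridsum M G.
Proof. move=> e; rewrite /gridsum; apply: ler_sum => i _; apply: ler_sum => j _; exact: e. Qed.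

Lemma gridsum_ge0 M F : (forall i j, 0 <= F i j) -> 0 <= gridsum M F.
Proof. move=> e; rewrite /gridsum; apply: sumr_ge0 => i _; apply: sumr_ge0 => j _; exact: e. Qed.

Lemma shift1 (M : nat) (f : int -> R) : (forall i, f (i + M%:Z) = f i) ->
  \sum_(1 <= i < M.+1) f (i%:Z + 1) = \sum_(1 <= i < M.+1) f i%:Z.
Proof.
move=> pf; case: M pf => [|M] pf; first by rewrite !big_geq.
rewrite [LHS]big_nat_recr // [RHS]big_nat_recl //= addrC; congr (_ + _).
  by rewrite addrC pf.
by apply: eq_bigr => i _; rewrite -addn1 PoszD.
Qed.

Lemma shiftx M F G : (forall i j, F (i + M%:Z) j = F i j) ->
  (forall i j, G i j = F (i + 1) j) -> gridsum M G = gridsum M F.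
Proof.
move=> pF e; rewrite /gridsum.
pose H := fun i : int => \sum_(1 <= j < M.+1) F i j%:Z.
transitivity (\sum_(1 <= i < M.+1) H (i%:Z + 1)).
  by apply: eq_bigr => i _; apply: eq_bigr => j _; rewrite e.
rewrite shift1 // => i; rewrite /H; apply: eq_bigr => j _; exact: pF.
Qed.

Lemma shifty M F G : (forall i j, F i (j + M%:Z) = F i j) ->
  (forall i j, G i j = F i (j + 1)) -> gridsum M G = gridsum M F.
Proof.
move=> pF e; rewrite /gridsum; apply: eq_bigr => i _.
transitivity (\sum_(1 <= j < M.+1) F i%:Z (j%:Z + 1)).
  by apply: eq_bigr => j _; rewrite e.
by rewrite shift1.
Qed.


Lemma cs_step (x y S A B : R) : 0 <= A -> 0 <= B -> S ^+ 2 <= A * B ->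
  (x * y + S) ^+ 2 <= (x ^+ 2 + A) * (y ^+ 2 + B).
Proof.
move=> A0 B0 h.
have P0 : 0 <= x ^+ 2 * B + y ^+ 2 * A by nra.
have key : (2 * x * y * S) ^+ 2 <= (x ^+ 2 * B + y ^+ 2 * A) ^+ 2.
  have : 0 <= (x ^+ 2 * B - y ^+ 2 * A) ^+ 2 by apply: sqr_ge0.
  have : 4 * x^+2 * y^+2 * S^+2 <= 4 * x^+2 * y^+2 * (A * B).
    by apply: ler_wpM2l => //; nra.
  nra.
have : 2 * x * y * S <= x ^+ 2 * B + y ^+ 2 * A.
  case: (lerP (2 * x * y * S) 0) => [h0|h0]; first lra.
  by rewrite -(ler_pXn2r (n:=2)) // ?nnegrE //; lra.
nra.
Qed.

Lemma cs_seq (I : Type) (r : seq I) (a b : I -> R) :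
  (\sum_(i <- r) a i * b i) ^+ 2 <= (\sum_(i <- r) a i ^+ 2) * (\sum_(i <- r) b i ^+ 2).
Proof.
elim: r => [|x r IH]; first by rewrite !big_nil mul0r expr0n.
rewrite !big_cons; apply: cs_step => //; apply: sumr_ge0 => i _; exact: sqr_ge0.
Qed.

Lemma cs_sqrt (I : Type) (r : seq I) (a b : I -> R) :
  \sum_(i <- r) a i * b i <= Num.sqrt (\sum_(i <- r) a i ^+ 2) * Num.sqrt (\sum_(i <- r) b i ^+ 2).
Proof.
rewrite -sqrtrM; last by apply: sumr_ge0 => i _; exact: sqr_ge0.
apply: le_trans (ler_norm _) _; rewrite -sqrtr_sqr; apply: ler_wsqrtr; exact: cs_seq.
Qed.

Lemma gs_cs M F G : gridsum M (fun i j => F i j * G i j) <=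
  Num.sqrt (gridsum M (fun i j => F i j ^+ 2)) * Num.sqrt (gridsum M (fun i j => G i j ^+ 2)).
Proof.
rewrite /gridsum.
apply: le_trans (_ : \sum_(1 <= i < M.+1) Num.sqrt (\sum_(1 <= j < M.+1) F i%:Z j%:Z ^+ 2) *
   Num.sqrt (\sum_(1 <= j < M.+1) G i%:Z j%:Z ^+ 2) <= _).
  apply: ler_sum => i _; exact: cs_sqrt.
apply: le_trans (cs_sqrt _ _ _) _.
apply: ler_pM; try exact: sqrtr_ge0; apply: ler_wsqrtr; apply: ler_sum => i _;
  rewrite sqr_sqrtr //; apply: sumr_ge0 => j _; exact: sqr_ge0.
Qed.

Lemma tele (a : nat -> R) (k n : nat) :
  `|a (k + n)%N - a k| <= \sum_(k <= l < k + n) `|a l.+1 - a l|.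
Proof.
elim: n => [|n IH]; first by rewrite addn0 subrr normr0 big_geq.
rewrite addnS big_nat_recr ?leq_addr //=.
apply: le_trans (_ : `|a (k + n).+1 - a (k + n)%N| + `|a (k + n)%N - a k| <= _).
  have -> : a (k + n).+1 - a k = (a (k + n).+1 - a (k + n)%N) + (a (k + n)%N - a k) by ring.
  exact: ler_normD.
by rewrite addrC lerD2l.
Qed.

Lemma subrange (D : nat -> R) (M k i : nat) : (forall l, 0 <= D l) ->
  (1 <= k)%N -> (k <= i)%N -> (i <= M.+1)%N ->
  \sum_(k <= l < i) D l <= \sum_(1 <= l < M.+1) D l.
Proof.
move=> D0 k1 ki iM.
rewrite (big_cat_nat k1 (leq_trans ki iM)) (big_cat_nat ki iM) /=.
have h1 : 0 <= \sum_(1 <= l < k) D l by apply: sumr_ge0.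
have h2 : 0 <= \sum_(i <= l < M.+1) D l by apply: sumr_ge0.
lra.
Qed.

Lemma oneD (a : nat -> R) (M i : nat) : (0 < M)%N -> (1 <= i)%N -> (i <= M)%N ->
  a i <= (\sum_(1 <= k < M.+1) a k) / M%:R + \sum_(1 <= l < M.+1) `|a l.+1 - a l|.
Proof.
move=> M0 i1 iM.
set T := \sum_(1 <= l < M.+1) `|a l.+1 - a l|.
have D0 : forall l, 0 <= `|a l.+1 - a l| by move=> l; exact: normr_ge0.
have hk : forall k, (1 <= k)%N -> (k <= M)%N -> a i <= a k + T.
  move=> k k1 kM; case: (leqP k i) => ki.
    have := tele a k (i - k); rewrite subnKC // => h.
    have h' : \sum_(k <= l < i) `|a l.+1 - a l| <= T := subrange D0 k1 ki (leq_trans iM (leqnSn M)).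
    have := ler_norm (a i - a k); lra.
  have := tele a i (k - i); rewrite subnKC; last exact: ltnW. move=> h.
  have h' : \sum_(i <= l < k) `|a l.+1 - a l| <= T := subrange D0 i1 (ltnW ki) (leq_trans kM (leqnSn M)).
  have := ler_norm (a i - a k); rewrite distrC; lra.
have Mp : 0 < M%:R :> R by rewrite ltr0n.
rewrite -(ler_pM2r Mp) mulrDl divfK ?gt_eqF //.
have : \sum_(1 <= k < M.+1) a i <= \sum_(1 <= k < M.+1) (a k + T).
  apply: ler_sum_nat => k /andP [k1 kM]; exact: hk.
rewrite big_split /= !sumr_const_nat subSS subn0 => hh.
by rewrite !mulr_natr.
Qed.

End Aux.

Section S4.
Variable R : realType.
Implicit Types (F G : int -> int -> R).

Lemma PoszS (l : nat) : (l.+1)%:Z = l%:Z + 1.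
Proof. by rewrite -addn1 PoszD. Qed.

Lemma lady M F G : (0 < M)%N -> (forall i j, 0 <= F i j) -> (forall i j, 0 <= G i j) ->
  gridsum M (fun i j => F i j * G i j) <=
  (gridsum M F / M%:R + gridsum M (fun i j => `|F (i + 1) j - F i j|)) *
  (gridsum M G / M%:R + gridsum M (fun i j => `|G i (j + 1) - G i j|)).
Proof.
move=> M0 F0 G0.
pose al (j : nat) := (\sum_(1 <= k < M.+1) F k%:Z j%:Z) / M%:R
   + \sum_(1 <= k < M.+1) `|F (k%:Z + 1) j%:Z - F k%:Z j%:Z|.
pose be (i : nat) := (\sum_(1 <= k < M.+1) G i%:Z k%:Z) / M%:R
   + \sum_(1 <= k < M.+1) `|G i%:Z (k%:Z + 1) - G i%:Z k%:Z|.
have hF : forall i j, (1 <= i <= M)%N -> F i%:Z j%:Z <= al j.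
  move=> i j /andP [i1 iM].
  apply: le_trans (oneD (fun k => F k%:Z j%:Z) M0 i1 iM) _.
  rewrite /al; apply: lerD => //; apply: ler_sum => k _; by rewrite /= PoszS.
have hG : forall i j, (1 <= j <= M)%N -> G i%:Z j%:Z <= be i.
  move=> i j /andP [j1 jM].
  apply: le_trans (oneD (fun k => G i%:Z k%:Z) M0 j1 jM) _.
  rewrite /be; apply: lerD => //; apply: ler_sum => k _; by rewrite /= PoszS.
apply: le_trans (_ : \sum_(1 <= i < M.+1) \sum_(1 <= j < M.+1) al j * be i <= _).
  apply: ler_sum_nat => i iM; apply: ler_sum_nat => j jM.
  apply: ler_pM; [exact: F0|exact: G0|exact: hF|exact: hG].
have -> : \sum_(1 <= i < M.+1) \sum_(1 <= j < M.+1) al j * be i =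
          (\sum_(1 <= j < M.+1) al j) * (\sum_(1 <= i < M.+1) be i).
  rewrite mulr_sumr; apply: eq_bigr => i _; by rewrite mulr_suml.
rewrite le_eqVlt; apply/orP; left; apply/eqP; congr (_ * _).
  rewrite /al big_split /= -mulr_suml /gridsum; congr (_ / _ + _);
    by rewrite exchange_big.
by rewrite /be big_split /= -mulr_suml.
Qed.

End S4.

Section S5.
Variable R : realType.
Implicit Types (F G v : int -> int -> R).

Definition perx M F := forall i j, F (i + M%:Z) j = F i j.
Definition pery M F := forall i j, F i (j + M%:Z) = F i j.

Ltac per M pv := move=> ? ? /=; rewrite ?(addrAC _ (Posz M)) ?pv.

Lemma sbpx M F G : perx M F -> perx M G ->
  gridsum M (fun i j => (F i j - F (i - 1) j) * G i j) =
  gridsum M (fun i j => F i j * (G i j - G (i + 1) j)).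
Proof.
move=> pF pG.
rewrite (gridsum_ext _ (fun i j => mulrBl (G i j) (F i j) (F (i - 1) j))).
rewrite (gridsum_ext _ (fun i j => mulrBr (F i j) (G i j) (G (i + 1) j))).
rewrite !gridsumB; congr (_ - _).
symmetry; apply: (shiftx (F := fun i j => F (i - 1) j * G i j)).
  by per M pF; rewrite pG.
by move=> i j; rewrite addrK.
Qed.

Lemma sbpy M F G : pery M F -> pery M G ->
  gridsum M (fun i j => (F i j - F i (j - 1)) * G i j) =
  gridsum M (fun i j => F i j * (G i j - G i (j + 1))).
Proof.
move=> pF pG.
rewrite (gridsum_ext _ (fun i j => mulrBl (G i j) (F i j) (F i (j - 1)))).
rewrite (gridsum_ext _ (fun i j => mulrBr (F i j) (G i j) (G i (j + 1)))).
rewrite !gridsumB; congr (_ - _).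
symmetry; apply: (shifty (F := fun i j => F i (j - 1) * G i j)).
  by per M pF; rewrite pG.
by move=> i j; rewrite addrK.
Qed.

Definition U v i j := v (i + 1) j - v i j.
Definition D2X v i j := v (i + 1) j - 2 * v i j + v (i - 1) j.
Definition D2Y v i j := v i (j + 1) - 2 * v i j + v i (j - 1).
Definition W v i j := v (i + 1) (j + 1) - v (i + 1) j - v i (j + 1) + v i j.

Lemma mixed M v : perx M v -> pery M v ->
  gridsum M (fun i j => D2X v i j * D2Y v i j) = gridsum M (fun i j => W v i j ^+ 2).
Proof.
move=> px py.
transitivity (gridsum M (fun i j => (U v i j - U v (i - 1) j) * D2Y v i j)).
  by apply: gridsum_ext => i j; rewrite /U /D2X subrK; ring.
rewrite sbpx; last first.
- by rewrite /D2Y; per M px.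
- by rewrite /U; per M px.
transitivity (- gridsum M (fun i j => (W v i j - W v i (j - 1)) * U v i j)).
  rewrite -gridsumN; apply: gridsum_ext => i j; rewrite /U /W /D2Y subrK; ring.
rewrite sbpy; last first.
- by rewrite /U; per M py.
- by rewrite /W; per M py.
rewrite -gridsumN; apply: gridsum_ext => i j; rewrite /U /W; ring.
Qed.

End S5.

Section S6.
Variable R : realType.
Implicit Types (F G P Q v f : int -> int -> R).

Lemma nK (x : R) : `|x| ^+ 2 = x ^+ 2.
Proof. exact: real_normK (num_real _). Qed.

Lemma sq_sum_le M P Q : gridsum M (fun i j => (P i j + Q i j) ^+ 2) <=
  2 * gridsum M (fun i j => P i j ^+ 2) + 2 * gridsum M (fun i j => Q i j ^+ 2).
Proof.
rewrite -!gridsumZ -gridsumD; apply: gridsum_le => i j.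
have := sqr_ge0 (P i j - Q i j); nra.
Qed.

Lemma diffbound M Dl P Q (c : R) : (forall i j, Dl i j = c * (P i j + Q i j)) ->
  gridsum M (fun i j => Q i j ^+ 2) = gridsum M (fun i j => P i j ^+ 2) ->
  gridsum M (fun i j => Dl i j ^+ 2) <= 4 * c ^+ 2 * gridsum M (fun i j => P i j ^+ 2).
Proof.
move=> e eQ.
rewrite (gridsum_ext _ (fun i j => (_ : Dl i j ^+ 2 = c ^+ 2 * (P i j + Q i j) ^+ 2))); last first.
  by move=> i j; rewrite e exprMn.
rewrite gridsumZ; have := sq_sum_le M P Q; rewrite eQ => h.
have := sqr_ge0 c; nra.
Qed.

Lemma sqrt_le_mul (x a b : R) : 0 <= a -> 0 <= b -> x <= a * b ^+ 2 -> Num.sqrt x <= Num.sqrt a * b.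
Proof.
move=> a0 b0 h; have -> : b = Num.sqrt (b ^+ 2) by rewrite sqrtr_sqr ger0_norm.
rewrite -sqrtrM //; exact: ler_wsqrtr.
Qed.

Lemma s2gen M f f' :
  gridsum M (fun i j => f' i j ^+ 2) = gridsum M (fun i j => f i j ^+ 2) ->
  gridsum M (fun i j => `|f' i j ^+ 2 - f i j ^+ 2|) <=
  Num.sqrt (gridsum M (fun i j => (f' i j - f i j) ^+ 2)) *
  (2 * Num.sqrt (gridsum M (fun i j => f i j ^+ 2))).
Proof.
move=> pf.
rewrite (gridsum_ext _ (fun i j => (_ : _ = `|f' i j - f i j| * `|f' i j + f i j|))); last first.
  by move=> i j; rewrite -normrM; congr `|_|; ring.
apply: le_trans (gs_cs _ _ _) _.
under [X in Num.sqrt X * _]gridsum_ext => i j do rewrite nK.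
apply: ler_wpM2l; first exact: sqrtr_ge0.
under gridsum_ext => i j do rewrite nK.
rewrite mulrC; apply: sqrt_le_mul => //; first by apply: gridsum_ge0 => i j; exact: sqr_ge0.
apply: le_trans (sq_sum_le _ _ _) _.
rewrite pf; lra.
Qed.

Lemma cube (x y : R) : `| `|x| ^+ 3 - `|y| ^+ 3 | <= 3 / 2 * `|x - y| * (x ^+ 2 + y ^+ 2).
Proof.
have e : `|x| ^+ 3 - `|y| ^+ 3 = (`|x| - `|y|) * (`|x| ^+ 2 + `|x| * `|y| + `|y| ^+ 2) by ring.
rewrite e normrM (ger0_norm (x := _ + _ + _)); last first.
  have := normr_ge0 x; have := normr_ge0 y; nra.
rewrite -mulrA [3 / 2 * _]mulrC -mulrA.
apply: ler_pM; first exact: normr_ge0.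
- have := normr_ge0 x; have := normr_ge0 y; nra.
- exact: ler_dist_dist.
have := sqr_ge0 (`|x| - `|y|); rewrite -(nK x) -(nK y); lra.
Qed.

Lemma s3gen M f f' :
  gridsum M (fun i j => (f' i j ^+ 2) ^+ 2) = gridsum M (fun i j => (f i j ^+ 2) ^+ 2) ->
  gridsum M (fun i j => `| `|f' i j| ^+ 3 - `|f i j| ^+ 3|) <=
  3 * Num.sqrt (gridsum M (fun i j => (f' i j - f i j) ^+ 2)) *
  Num.sqrt (gridsum M (fun i j => (f i j ^+ 2) ^+ 2)).
Proof.
move=> pf.
apply: le_trans (gridsum_le _ (fun i j => cube (f' i j) (f i j))) _.
under gridsum_ext => i j do rewrite -mulrA.
rewrite gridsumZ.
apply: le_trans (_ : 3 / 2 * (Num.sqrt (gridsum M (fun i j => (f' i j - f i j) ^+ 2)) *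
    (2 * Num.sqrt (gridsum M (fun i j => (f i j ^+ 2) ^+ 2)))) <= _); last first.
  have := sqrtr_ge0 (gridsum M (fun i j => (f' i j - f i j) ^+ 2)); nra.
apply: ler_wpM2l; first lra.
apply: le_trans (gs_cs _ _ _) _.
under [X in Num.sqrt X * _]gridsum_ext => i j do rewrite nK.
apply: ler_wpM2l; first exact: sqrtr_ge0.
rewrite mulrC; apply: sqrt_le_mul => //; first by apply: gridsum_ge0 => i j; exact: sqr_ge0.
apply: le_trans (sq_sum_le _ _ _) _.
rewrite pf; lra.
Qed.

End S6.

Section S7.
Variable R : realType.
Implicit Types (F G P Q v f : int -> int -> R).

Lemma shx M f : perx M f -> forall (p : R -> R),
  gridsum M (fun i j => p (f (i + 1) j)) = gridsum M (fun i j => p (f i j)).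
Proof. move=> pf p; apply: (shiftx (F := fun i j => p (f i j))) => // i j /=; by rewrite pf. Qed.

Lemma shy M f : pery M f -> forall (p : R -> R),
  gridsum M (fun i j => p (f i (j + 1))) = gridsum M (fun i j => p (f i j)).
Proof. move=> pf p; apply: (shifty (F := fun i j => p (f i j))) => // i j /=; by rewrite pf. Qed.

Lemma lad4 M f : (0 < M)%N -> perx M f -> pery M f ->
  gridsum M (fun i j => f i j ^+ 2 * f i j ^+ 2) <=
  (gridsum M (fun i j => f i j ^+ 2) / M%:R +
     Num.sqrt (gridsum M (fun i j => (f (i + 1) j - f i j) ^+ 2)) *
     (2 * Num.sqrt (gridsum M (fun i j => f i j ^+ 2)))) *
  (gridsum M (fun i j => f i j ^+ 2) / M%:R +
     Num.sqrt (gridsum M (fun i j => (f i (j + 1) - f i j) ^+ 2)) *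
     (2 * Num.sqrt (gridsum M (fun i j => f i j ^+ 2)))).
Proof.
move=> M0 px py.
apply: le_trans (lady (F := fun i j => f i j ^+ 2) (G := fun i j => f i j ^+ 2) M0 _ _) _;
  try by move=> i j; exact: sqr_ge0.
have Mp : 0 <= (gridsum M (fun i j => f i j ^+ 2)) / M%:R.
  by apply: divr_ge0 => //; apply: gridsum_ge0 => i j; exact: sqr_ge0.
apply: ler_pM.
- apply: addr_ge0 => //; apply: gridsum_ge0 => i j; exact: normr_ge0.
- apply: addr_ge0 => //; apply: gridsum_ge0 => i j; exact: normr_ge0.
- rewrite lerD2l; apply: (s2gen (f' := fun i j => f (i + 1) j)).
  exact: (shx px (fun x => x ^+ 2)).
- rewrite lerD2l; apply: (s2gen (f' := fun i j => f i (j + 1))).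
  exact: (shy py (fun x => x ^+ 2)).
Qed.

Lemma s3bound M f : gridsum M (fun i j => `|f i j| ^+ 3) <=
  Num.sqrt (gridsum M (fun i j => f i j ^+ 2)) * Num.sqrt (gridsum M (fun i j => (f i j ^+ 2) ^+ 2)).
Proof.
rewrite (gridsum_ext _ (fun i j => (_ : _ = `|f i j| * f i j ^+ 2))); last first.
  by move=> i j; rewrite -(nK (f i j)); ring.
apply: le_trans (gs_cs _ _ _) _.
under gridsum_ext => i j do rewrite nK.
done.
Qed.

Lemma lad6 M f : (0 < M)%N -> perx M f -> pery M f ->
  gridsum M (fun i j => `|f i j| ^+ 3 * `|f i j| ^+ 3) <=
  (Num.sqrt (gridsum M (fun i j => f i j ^+ 2)) * Num.sqrt (gridsum M (fun i j => (f i j ^+ 2) ^+ 2)) / M%:R +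
     3 * Num.sqrt (gridsum M (fun i j => (f (i + 1) j - f i j) ^+ 2)) *
     Num.sqrt (gridsum M (fun i j => (f i j ^+ 2) ^+ 2))) *
  (Num.sqrt (gridsum M (fun i j => f i j ^+ 2)) * Num.sqrt (gridsum M (fun i j => (f i j ^+ 2) ^+ 2)) / M%:R +
     3 * Num.sqrt (gridsum M (fun i j => (f i (j + 1) - f i j) ^+ 2)) *
     Num.sqrt (gridsum M (fun i j => (f i j ^+ 2) ^+ 2))).
Proof.
move=> M0 px py.
apply: le_trans (lady (F := fun i j => `|f i j| ^+ 3) (G := fun i j => `|f i j| ^+ 3) M0 _ _) _;
  try by move=> i j; apply: exprn_ge0; exact: normr_ge0.
have S0 : 0 <= gridsum M (fun i j => `|f i j| ^+ 3) / M%:R.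
  by apply: divr_ge0 => //; apply: gridsum_ge0 => i j; apply: exprn_ge0; exact: normr_ge0.
have S1 : gridsum M (fun i j => `|f i j| ^+ 3) / M%:R <=
  Num.sqrt (gridsum M (fun i j => f i j ^+ 2)) * Num.sqrt (gridsum M (fun i j => (f i j ^+ 2) ^+ 2)) / M%:R.
  by rewrite ler_pM2r ?invr_gt0 ?ltr0n //; exact: s3bound.
apply: ler_pM.
- apply: addr_ge0 => //; apply: gridsum_ge0 => i j; exact: normr_ge0.
- apply: addr_ge0 => //; apply: gridsum_ge0 => i j; exact: normr_ge0.
- apply: lerD => //; apply: (s3gen (f' := fun i j => f (i + 1) j)).
  exact: (shx px (fun x => (x ^+ 2) ^+ 2)).
- apply: lerD => //; apply: (s3gen (f' := fun i j => f i (j + 1))).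
  exact: (shy py (fun x => (x ^+ 2) ^+ 2)).
Qed.

End S7.

Section S8.
Variable R : realType.
Implicit Types (F G P Q v f : int -> int -> R).

Ltac per M pv := move=> ? ? /=; rewrite ?(addrAC _ (Posz M)) ?pv.

Lemma shxm M f : perx M f -> forall (p : R -> R),
  gridsum M (fun i j => p (f (i - 1) j)) = gridsum M (fun i j => p (f i j)).
Proof.
move=> pf p; symmetry; apply: (shiftx (F := fun i j => p (f (i - 1) j))).
  by per M pf.
by move=> i j; rewrite addrK.
Qed.

Lemma shym M f : pery M f -> forall (p : R -> R),
  gridsum M (fun i j => p (f i (j - 1))) = gridsum M (fun i j => p (f i j)).
Proof.
move=> pf p; symmetry; apply: (shifty (F := fun i j => p (f i (j - 1)))).
  by per M pf.
by move=> i j; rewrite addrK.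
Qed.

Definition wv (h : R) v i j := W v i j / h ^+ 2.

Section V.
Variables (M : nat) (h : R) (v : int -> int -> R).
Hypotheses (h0 : h != 0) (px : perx M v) (py : pery M v).

Lemma pxd2x : perx M (d2x h v). Proof. by rewrite /d2x; per M px. Qed.
Lemma pyd2y : pery M (d2y h v). Proof. by rewrite /d2y; per M py. Qed.
Lemma pxw : perx M (wv h v). Proof. by rewrite /wv /W; per M px. Qed.
Lemma pyw : pery M (wv h v). Proof. by rewrite /wv /W; per M py. Qed.
Lemma pxDx : perx M (Dx h v). Proof. by rewrite /Dx; per M px. Qed.
Lemma pyDx : pery M (Dx h v). Proof. by rewrite /Dx; per M py. Qed.
Lemma pxDy : perx M (Dy h v). Proof. by rewrite /Dy; per M px. Qed.
Lemma pyDy : pery M (Dy h v). Proof. by rewrite /Dy; per M py. Qed.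

Lemma bxf : gridsum M (fun i j => (Dx h v (i + 1) j - Dx h v i j) ^+ 2) <=
  h ^+ 2 * gridsum M (fun i j => d2x h v i j ^+ 2).
Proof.
apply: le_trans (diffbound (c := h / 2) (P := d2x h v) (Q := fun i j => d2x h v (i + 1) j) _ _) _.
- move=> i j; rewrite /Dx /d2x addrK; field; by rewrite h0.
- exact: (shx pxd2x (fun x => x ^+ 2)).
- apply: ler_wpM2r; first by apply: gridsum_ge0 => i j; exact: sqr_ge0.
  by rewrite expr_div_n; lra.
Qed.

Lemma byf : gridsum M (fun i j => (Dx h v i (j + 1) - Dx h v i j) ^+ 2) <=
  h ^+ 2 * gridsum M (fun i j => wv h v i j ^+ 2).
Proof.
apply: le_trans (diffbound (c := h / 2) (P := wv h v) (Q := fun i j => wv h v (i - 1) j) _ _) _.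
- move=> i j; rewrite /Dx /wv /W subrK; field; by rewrite h0.
- exact: (shxm pxw (fun x => x ^+ 2)).
- apply: ler_wpM2r; first by apply: gridsum_ge0 => i j; exact: sqr_ge0.
  by rewrite expr_div_n; lra.
Qed.

Lemma bxg : gridsum M (fun i j => (Dy h v (i + 1) j - Dy h v i j) ^+ 2) <=
  h ^+ 2 * gridsum M (fun i j => wv h v i j ^+ 2).
Proof.
apply: le_trans (diffbound (c := h / 2) (P := wv h v) (Q := fun i j => wv h v i (j - 1)) _ _) _.
- move=> i j; rewrite /Dy /wv /W subrK; field; by rewrite h0.
- exact: (shym pyw (fun x => x ^+ 2)).
- apply: ler_wpM2r; first by apply: gridsum_ge0 => i j; exact: sqr_ge0.
  by rewrite expr_div_n; lra.
Qed.

Lemma byg : gridsum M (fun i j => (Dy h v i (j + 1) - Dy h v i j) ^+ 2) <=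
  h ^+ 2 * gridsum M (fun i j => d2y h v i j ^+ 2).
Proof.
apply: le_trans (diffbound (c := h / 2) (P := d2y h v) (Q := fun i j => d2y h v i (j + 1)) _ _) _.
- move=> i j; rewrite /Dy /d2y addrK; field; by rewrite h0.
- exact: (shy pyd2y (fun x => x ^+ 2)).
- apply: ler_wpM2r; first by apply: gridsum_ge0 => i j; exact: sqr_ge0.
  by rewrite expr_div_n; lra.
Qed.

Lemma lapdecomp : gridsum M (fun i j => lap_h h v i j ^+ 2) =
  gridsum M (fun i j => d2x h v i j ^+ 2) + gridsum M (fun i j => d2y h v i j ^+ 2)
  + 2 * gridsum M (fun i j => wv h v i j ^+ 2).
Proof.
have e1 : gridsum M (fun i j => d2x h v i j * d2y h v i j) = gridsum M (fun i j => wv h v i j ^+ 2).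
  rewrite (gridsum_ext _ (fun i j => (_ : d2x h v i j * d2y h v i j = (h ^+ 4)^-1 * (D2X v i j * D2Y v i j)))); last first.
    by move=> i j; rewrite /d2x /d2y /D2X /D2Y; field; rewrite h0.
  rewrite (gridsum_ext _ (fun i j => (_ : wv h v i j ^+ 2 = (h ^+ 4)^-1 * (W v i j ^+ 2)))); last first.
    by move=> i j; rewrite /wv; field; rewrite h0.
  by rewrite !gridsumZ mixed.
rewrite -e1 -gridsumZ -!gridsumD; apply: gridsum_ext => i j; rewrite /lap_h; ring.
Qed.

End V.
End S8.

Section S9.
Variable R : realType.

Lemma alg4 (h M s bx by_ q P k : R) : 0 < h -> 0 < M -> k = 1 / (M * h) -> 0 <= s ->
  0 <= bx -> bx <= q -> 0 <= by_ -> by_ <= q -> h ^+ 2 * s ^+ 2 <= P ->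
  h ^+ 2 * ((s ^+ 2 / M + bx * (2 * s)) * (s ^+ 2 / M + by_ * (2 * s))) <=
  4 * (h ^+ 2 * s ^+ 2) * (P * k ^+ 2 + 2 * q ^+ 2).
Proof.
move=> hp Mp ek s0 bx0 bxq by0 byq hP.
have k0 : 0 < k by rewrite ek; apply: divr_gt0 => //; apply: mulr_gt0.
set a := h * s.
have a0 : 0 <= a by apply: mulr_ge0 => //; lra.
have e1 : h * (s ^+ 2 / M) = a ^+ 2 * k.
  rewrite /a ek; field; apply/andP; split; rewrite gt_eqF //.
have e : h ^+ 2 * ((s ^+ 2 / M + bx * (2 * s)) * (s ^+ 2 / M + by_ * (2 * s))) =
   (a ^+ 2 * k + 2 * bx * a) * (a ^+ 2 * k + 2 * by_ * a).
  rewrite -e1 /a; ring.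
rewrite e.
have hA : h ^+ 2 * s ^+ 2 = a ^+ 2 by rewrite /a; ring.
rewrite hA in hP *.
apply: le_trans (_ : (a ^+ 2 * k + 2 * q * a) ^+ 2 <= _).
  rewrite expr2; apply: ler_pM; try nra.
have q0 : 0 <= q by lra.
have : a ^+ 2 * k ^+ 2 <= P * k ^+ 2 by apply: ler_wpM2r => //; nra.
have := sqr_ge0 (a ^+ 2 * k - 2 * q * a).
nra.
Qed.

Lemma alg6 (h M s r bx by_ q P k : R) : 0 < h -> 0 < M -> k = 1 / (M * h) -> 0 <= s -> 0 <= r ->
  0 <= bx -> bx <= q -> 0 <= by_ -> by_ <= q -> h ^+ 2 * s ^+ 2 <= P ->
  h ^+ 2 * r ^+ 2 <= 4 * (h ^+ 2 * s ^+ 2) * (P * k ^+ 2 + 2 * q ^+ 2) ->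
  h ^+ 2 * ((s * r / M + 3 * bx * r) * (s * r / M + 3 * by_ * r)) <=
  8 * (h ^+ 2 * s ^+ 2) * (P * k ^+ 2 + 16 * q ^+ 2) ^+ 2.
Proof.
move=> hp Mp ek s0 r0 bx0 bxq by0 byq hP hB.
have k0 : 0 < k by rewrite ek; apply: divr_gt0 => //; apply: mulr_gt0.
set a := h * s.
have a0 : 0 <= a by apply: mulr_ge0 => //; lra.
have e1 : s / M = a * k.
  rewrite /a ek; field; apply/andP; split; rewrite gt_eqF //.
have e : h ^+ 2 * ((s * r / M + 3 * bx * r) * (s * r / M + 3 * by_ * r)) =
   (h ^+ 2 * r ^+ 2) * ((a * k + 3 * bx) * (a * k + 3 * by_)).
  rewrite -e1; ring.
rewrite e.
have hA : h ^+ 2 * s ^+ 2 = a ^+ 2 by rewrite /a; ring.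
rewrite hA in hP hB *.
have q0 : 0 <= q by lra.
have B0 : 0 <= h ^+ 2 * r ^+ 2 by nra.
have ak0 : 0 <= a * k by apply: mulr_ge0 => //; lra.
have F1 : (a * k + 3 * bx) * (a * k + 3 * by_) <= 2 * (P * k ^+ 2 + 9 * q ^+ 2).
  apply: le_trans (_ : (a * k + 3 * q) ^+ 2 <= _).
    rewrite expr2; apply: ler_pM; lra.
  have : a ^+ 2 * k ^+ 2 <= P * k ^+ 2 by apply: ler_wpM2r => //; nra.
  have := sqr_ge0 (a * k - 3 * q); nra.
apply: le_trans (_ : (4 * a ^+ 2 * (P * k ^+ 2 + 2 * q ^+ 2)) * (2 * (P * k ^+ 2 + 9 * q ^+ 2)) <= _).
  apply: ler_pM => //; apply: mulr_ge0; lra.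
have Pk : 0 <= P * k ^+ 2 by apply: mulr_ge0; [nra|exact: sqr_ge0].
have qq : 0 <= q ^+ 2 by exact: sqr_ge0.
have : (P * k ^+ 2 + 2 * q ^+ 2) * (P * k ^+ 2 + 9 * q ^+ 2) <= (P * k ^+ 2 + 16 * q ^+ 2) ^+ 2 by nra.
have aa : 0 <= a ^+ 2 by nra.
nra.
Qed.

End S9.

Section H.
Variable R : realType.
Lemma hl1 (a b c : R) : 0 <= b -> 0 <= c -> a <= a + b + 2 * c. Proof. lra. Qed.
Lemma hl2 (a b c : R) : 0 <= a -> 0 <= c -> b <= a + b + 2 * c. Proof. lra. Qed.
Lemma hl3 (a b c : R) : 0 <= a -> 0 <= b -> 0 <= c -> c <= a + b + 2 * c. Proof. lra. Qed.
Lemma hl4 (a b : R) : 0 <= b -> a <= a + b. Proof. lra. Qed.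
Lemma hl5 (a b : R) : 0 <= a -> b <= a + b. Proof. lra. Qed.
Lemma hl6 (P k q c : R) : 0 <= P -> 0 <= c -> 0 <= P * k ^+ 2 + c * q ^+ 2.
Proof. move=> P0 c0; have := sqr_ge0 q; have := sqr_ge0 k; nra. Qed.
Lemma hl7 (a b : R) : (a + b) ^+ 2 <= 2 * (a * a + b * b).
Proof. have := sqr_ge0 (a - b); nra. Qed.
Lemma hl8 (H F G sf sg Y : R) : H * F <= 4 * (H * sf) * Y -> H * G <= 4 * (H * sg) * Y ->
  H * (2 * (F + G)) <= 8 * (H * (sf + sg)) * Y.
Proof. nra. Qed.
Lemma hl9 (a b : R) : 0 <= a -> 0 <= b -> (a + b) ^+ 3 <= 4 * (a ^+ 3 + b ^+ 3).
Proof.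
move=> a0 b0; have : 0 <= (a + b) * (a - b) ^+ 2 by apply: mulr_ge0 => //; [lra|exact: sqr_ge0].
nra.
Qed.
Lemma hl10 (H F G sf sg Y : R) : H * F <= 8 * (H * sf) * Y -> H * G <= 8 * (H * sg) * Y ->
  H * (4 * (F + G)) <= 32 * (H * (sf + sg)) * Y.
Proof. nra. Qed.

Lemma powinv' (x : R) (n : nat) : 0 <= x -> (0 < n)%N -> (powR x (n%:R)^-1) ^+ n = x.
Proof.
move=> x0 n0; rewrite -powR_mulrn ?powR_ge0 // -powRrM mulVf ?powRr1 //.
by rewrite pnatr_eq0 -lt0n.
Qed.

Lemma fin4 (Q P Y : R) : 0 <= Q -> 0 <= P -> 0 <= Y -> Q <= 8 * P * Y ->
  Q `^ 4^-1 <= 2 * Num.sqrt P `^ (1 / 2) * Y `^ (1 / 4).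
Proof.
move=> Q0 P0 Y0 h.
rewrite -(ler_pXn2r (n := 4)) ?nnegrE; last first.
- by apply: mulr_ge0; [apply: mulr_ge0; [lra|exact: powR_ge0]|exact: powR_ge0].
- exact: powR_ge0.
- done.
have e1 : (Q `^ 4^-1) ^+ 4 = Q by apply: powinv'.
have e2 : (Y `^ (1 / 4)) ^+ 4 = Y by rewrite div1r; apply: powinv'.
have e3 : (Num.sqrt P `^ (1 / 2)) ^+ 4 = P.
  rewrite (_ : 4 = 2 * 2)%N // exprM div1r powinv' ?sqrtr_ge0 // sqr_sqrtr //.
rewrite !exprMn e1 e2 e3.
have : 0 <= P * Y by apply: mulr_ge0.
nra.
Qed.

Lemma fin6 (Q P Y : R) : 0 <= Q -> 0 <= P -> 0 <= Y -> Q <= 32 * P * Y ^+ 2 ->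
  Q `^ 6^-1 <= 2 * Num.sqrt P `^ (1 / 3) * Y `^ (1 / 3).
Proof.
move=> Q0 P0 Y0 h.
rewrite -(ler_pXn2r (n := 6)) ?nnegrE; last first.
- by apply: mulr_ge0; [apply: mulr_ge0; [lra|exact: powR_ge0]|exact: powR_ge0].
- exact: powR_ge0.
- done.
have e1 : (Q `^ 6^-1) ^+ 6 = Q by apply: powinv'.
have e2 : (Y `^ (1 / 3)) ^+ 6 = Y ^+ 2.
  by rewrite (_ : 6 = 3 * 2)%N // exprM div1r powinv'.
have e3 : (Num.sqrt P `^ (1 / 3)) ^+ 6 = P.
  rewrite (_ : 6 = 3 * 2)%N // exprM div1r powinv' ?sqrtr_ge0 // sqr_sqrtr //.
rewrite !exprMn e1 e2 e3.
have : 0 <= P * Y ^+ 2 by apply: mulr_ge0 => //; exact: sqr_ge0.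
nra.
Qed.
End H.

Unset Implicit Arguments. Set Strict Implicit. Set Printing Implicit Defensive.

Theorem lemma3p5 (R : realType) (L : R) (hL : 0 < L) :
  exists K1 K2 : R, 0 < K1 /\ 0 < K2 /\
  forall (M : nat) (v : int -> int -> R),
    (0 < M)%N -> periodic M v ->
    let h := L / M%:R in
    grad_lq h M 4 v <=
      K1 * powR (grad_lq h M 2 v) (1 / 2)
         * powR (2 * l2norm h M (lap_h h v) ^+ 2
                 + 1 / L ^+ 2 * grad_lq h M 2 v ^+ 2) (1 / 4)
    /\
    grad_lq h M 6 v <=
      K2 * powR (grad_lq h M 2 v) (1 / 3)
         * powR (16 * l2norm h M (lap_h h v) ^+ 2
                 + 1 / L ^+ 2 * grad_lq h M 2 v ^+ 2) (1 / 3).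
Proof.
exists 2, 2; do 2 (split; first lra).
move=> M v M0 pv h.
have Mp : 0 < M%:R :> R by rewrite ltr0n.
have hp : 0 < h by rewrite /h divr_gt0.
have h0 : h != 0 by rewrite gt_eqF.
have px : perx M v by move=> i j; case: (pv i j).
have py : pery M v by move=> i j; case: (pv i j).
have ek : 1 / L = 1 / (M%:R * h) by rewrite /h [M%:R * _]mulrC divfK ?gt_eqF.
set k := 1 / L.
have k0 : 0 < k by rewrite /k divr_gt0.
have eL2 : 1 / L ^+ 2 = k ^+ 2 by rewrite /k expr_div_n expr1n.
set f := Dx h v. set g := Dy h v.
have gradE : forall i j, gradabs h v i j ^+ 2 = f i j ^+ 2 + g i j ^+ 2.
  by move=> i j; rewrite /gradabs sqr_sqrtr // addr_ge0 // sqr_ge0.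
have pw : forall i j (n : nat), powR (gradabs h v i j) n%:R = gradabs h v i j ^+ n.
  by move=> i j n; rewrite powR_mulrn // sqrtr_ge0.
set S2f := gridsum M (fun i j => f i j ^+ 2).
set S2g := gridsum M (fun i j => g i j ^+ 2).
have S2f0 : 0 <= S2f by apply: gridsum_ge0 => i j; exact: sqr_ge0.
have S2g0 : 0 <= S2g by apply: gridsum_ge0 => i j; exact: sqr_ge0.
have h20 : 0 < h ^+ 2 by apply: exprn_gt0.
have h2le : 0 <= h ^+ 2 by exact: ltW.
set P := h ^+ 2 * (S2f + S2g).
have P0 : 0 <= P by apply: mulr_ge0 => //; exact: addr_ge0.
have G2 : grad_lq h M 2 v = Num.sqrt P.
  rewrite /grad_lq (gridsum_ext _ (fun i j => (_ : _ = f i j ^+ 2 + g i j ^+ 2))); last first.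
    by move=> i j; rewrite pw gradE.
  by rewrite gridsumD powR12_sqrt.
set Q4 := h ^+ 2 * gridsum M (fun i j => (f i j ^+ 2 + g i j ^+ 2) ^+ 2).
have G4 : grad_lq h M 4 v = powR Q4 4^-1.
  rewrite /grad_lq (gridsum_ext _ (fun i j => (_ : _ = (f i j ^+ 2 + g i j ^+ 2) ^+ 2))) //.
  by move=> i j; rewrite pw -gradE -exprM.
set Q6 := h ^+ 2 * gridsum M (fun i j => (f i j ^+ 2 + g i j ^+ 2) ^+ 3).
have G6 : grad_lq h M 6 v = powR Q6 6^-1.
  rewrite /grad_lq (gridsum_ext _ (fun i j => (_ : _ = (f i j ^+ 2 + g i j ^+ 2) ^+ 3))) //.
  by move=> i j; rewrite pw -gradE -exprM.
set Qd := h ^+ 2 * gridsum M (fun i j => lap_h h v i j ^+ 2).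
have Qd0 : 0 <= Qd by apply: mulr_ge0; [exact: h2le|apply: gridsum_ge0 => i j; exact: sqr_ge0].
have GL : l2norm h M (lap_h h v) ^+ 2 = Qd by rewrite /l2norm sqr_sqrtr.
set q := Num.sqrt Qd.
have q0 : 0 <= q by exact: sqrtr_ge0.
have qQ : q ^+ 2 = Qd by rewrite sqr_sqrtr.
have HQ := lapdecomp h0 px py.
set X1 := gridsum M (fun i j => d2x h v i j ^+ 2) in HQ.
set X2 := gridsum M (fun i j => d2y h v i j ^+ 2) in HQ.
set X3 := gridsum M (fun i j => wv h v i j ^+ 2) in HQ.
have X10 : 0 <= X1 by apply: gridsum_ge0 => i j; exact: sqr_ge0.
have X20 : 0 <= X2 by apply: gridsum_ge0 => i j; exact: sqr_ge0.
have X30 : 0 <= X3 by apply: gridsum_ge0 => i j; exact: sqr_ge0.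
have QX1 : h ^+ 2 * X1 <= Qd by rewrite /Qd HQ; apply: ler_wpM2l => //; exact: hl1.
have QX2 : h ^+ 2 * X2 <= Qd by rewrite /Qd HQ; apply: ler_wpM2l => //; exact: hl2.
have QX3 : h ^+ 2 * X3 <= Qd by rewrite /Qd HQ; apply: ler_wpM2l => //; exact: hl3.
have sq : forall x, 0 <= x -> x <= Qd -> 0 <= Num.sqrt x /\ Num.sqrt x <= q.
  by move=> x x0 xQ; split; [exact: sqrtr_ge0|exact: ler_wsqrtr].
have sqp : forall (F : int -> int -> R), 0 <= gridsum M (fun i j => F i j ^+ 2).
  by move=> F; apply: gridsum_ge0 => i j; exact: sqr_ge0.
have [bxf0 bxfq] := sq _ (sqp _) (le_trans (bxf h0 px) QX1).
have [byf0 byfq] := sq _ (sqp _) (le_trans (byf h0 px) QX3).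
have [bxg0 bxgq] := sq _ (sqp _) (le_trans (bxg h0 py) QX3).
have [byg0 bygq] := sq _ (sqp _) (le_trans (byg h0 py) QX2).
have hP1 : h ^+ 2 * Num.sqrt S2f ^+ 2 <= P by rewrite sqr_sqrtr // /P; apply: ler_wpM2l => //; exact: hl4.
have hP2 : h ^+ 2 * Num.sqrt S2g ^+ 2 <= P by rewrite sqr_sqrtr // /P; apply: ler_wpM2l => //; exact: hl5.
have A4f : h ^+ 2 * gridsum M (fun i j => f i j ^+ 2 * f i j ^+ 2) <=
    4 * (h ^+ 2 * S2f) * (P * k ^+ 2 + 2 * q ^+ 2).
  have := alg4 hp Mp ek (sqrtr_ge0 S2f) bxf0 bxfq byf0 byfq hP1.
  rewrite sqr_sqrtr // => H; apply: le_trans H; apply: ler_wpM2l; first exact: h2le.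
  exact: (lad4 M0 (pxDx h px) (pyDx h py)).
have A4g : h ^+ 2 * gridsum M (fun i j => g i j ^+ 2 * g i j ^+ 2) <=
    4 * (h ^+ 2 * S2g) * (P * k ^+ 2 + 2 * q ^+ 2).
  have := alg4 hp Mp ek (sqrtr_ge0 S2g) bxg0 bxgq byg0 bygq hP2.
  rewrite sqr_sqrtr // => H; apply: le_trans H; apply: ler_wpM2l; first exact: h2le.
  exact: (lad4 M0 (pxDy h px) (pyDy h py)).
have Y0 : 0 <= P * k ^+ 2 + 2 * q ^+ 2 by apply: hl6.
have key4 : Q4 <= 8 * P * (P * k ^+ 2 + 2 * q ^+ 2).
  apply: le_trans (_ : h ^+ 2 * (2 * (gridsum M (fun i j => f i j ^+ 2 * f i j ^+ 2)
        + gridsum M (fun i j => g i j ^+ 2 * g i j ^+ 2))) <= _).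
    apply: ler_wpM2l; first exact: h2le.
    rewrite -gridsumD -gridsumZ; apply: gridsum_le => i j; exact: hl7.
  exact: hl8.
set S4f := gridsum M (fun i j => (f i j ^+ 2) ^+ 2).
set S4g := gridsum M (fun i j => (g i j ^+ 2) ^+ 2).
have S4fE : S4f = gridsum M (fun i j => f i j ^+ 2 * f i j ^+ 2).
  by apply: gridsum_ext => i j; rewrite expr2.
have S4gE : S4g = gridsum M (fun i j => g i j ^+ 2 * g i j ^+ 2).
  by apply: gridsum_ext => i j; rewrite expr2.
have S4f0 : 0 <= S4f by apply: gridsum_ge0 => i j; exact: sqr_ge0.
have S4g0 : 0 <= S4g by apply: gridsum_ge0 => i j; exact: sqr_ge0.
have A6f : h ^+ 2 * gridsum M (fun i j => `|f i j| ^+ 3 * `|f i j| ^+ 3) <=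
    8 * (h ^+ 2 * S2f) * (P * k ^+ 2 + 16 * q ^+ 2) ^+ 2.
  have := alg6 hp Mp ek (sqrtr_ge0 S2f) (sqrtr_ge0 S4f) bxf0 bxfq byf0 byfq hP1.
  rewrite (sqr_sqrtr S2f0) (sqr_sqrtr S4f0) S4fE => H; have H' := H A4f; apply: le_trans H'; apply: ler_wpM2l; first exact: h2le.
  rewrite -S4fE; exact: (lad6 M0 (pxDx h px) (pyDx h py)).
have A6g : h ^+ 2 * gridsum M (fun i j => `|g i j| ^+ 3 * `|g i j| ^+ 3) <=
    8 * (h ^+ 2 * S2g) * (P * k ^+ 2 + 16 * q ^+ 2) ^+ 2.
  have := alg6 hp Mp ek (sqrtr_ge0 S2g) (sqrtr_ge0 S4g) bxg0 bxgq byg0 bygq hP2.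
  rewrite (sqr_sqrtr S2g0) (sqr_sqrtr S4g0) S4gE => H; have H' := H A4g; apply: le_trans H'; apply: ler_wpM2l; first exact: h2le.
  rewrite -S4gE; exact: (lad6 M0 (pxDy h px) (pyDy h py)).
have key6 : Q6 <= 32 * P * (P * k ^+ 2 + 16 * q ^+ 2) ^+ 2.
  apply: le_trans (_ : h ^+ 2 * (4 * (gridsum M (fun i j => `|f i j| ^+ 3 * `|f i j| ^+ 3)
        + gridsum M (fun i j => `|g i j| ^+ 3 * `|g i j| ^+ 3))) <= _).
    apply: ler_wpM2l; first exact: h2le.
    rewrite -gridsumD -gridsumZ; apply: gridsum_le => i j.
    have e : forall x : R, `|x| ^+ 3 * `|x| ^+ 3 = (x ^+ 2) ^+ 3.
      by move=> x; rewrite -(nK x); ring.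
    rewrite !e; apply: hl9; exact: sqr_ge0.
  exact: hl10.
rewrite G2 G4 G6 GL sqr_sqrtr // eL2 -qQ.
have ePY : forall c : R, c * q ^+ 2 + k ^+ 2 * P = P * k ^+ 2 + c * q ^+ 2 by move=> c; ring.
rewrite !ePY.
have Q40 : 0 <= Q4.
  apply: mulr_ge0; [exact: h2le|apply: gridsum_ge0 => i j; exact: sqr_ge0].
have Q60 : 0 <= Q6.
  apply: mulr_ge0; first exact: h2le; apply: gridsum_ge0 => i j; apply: exprn_ge0; apply: addr_ge0; exact: sqr_ge0.
have Z0 : 0 <= P * k ^+ 2 + 16 * q ^+ 2 by apply: hl6.
split; [apply: fin4|apply: fin6] => //.
Qed.
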